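(* Let $\mathsf{P}$ be a program of the language $\mathcal{H}$ and let $\mathsf{Gr(P)}$ be its ground instantiation, regarded as a (possibly infinite) propositional program. Let $M$ be a three-valued (partial) interpretation of $\mathsf{Gr(P)}$ and let $\mathcal{M}$ be the Herbrand interpretation of $\mathsf{P}$ whose valuation function satisfies $v_{\mathcal{M}}(\mathsf{A}) = M(\mathsf{A})$ for every $\mathsf{A}\in U_{\mathsf{P},o}$. Then $\mathcal{M}$ is a Herbrand model of $\mathsf{P}$ if and only if $M$ is a model of $\mathsf{Gr(P)}$. Moreover, $\mathcal{M}$ is $\leq$-minimal (respectively, $\preceq$-minimal) if and only if $M$ is $\leq$-minimal (respectively, $\preceq$-minimal).
   Context: Types of $\mathcal{H}$: base types $\iota$ (individuals) and $o$ (booleans); functional types $\sigma ::= \iota \mid \iota\to\sigma$; predicate types $\pi ::= o \mid \rho\to\pi$; argument types $\rho ::= \iota \mid \pi$. The alphabet contains predicate variables and predicate constants of every predicate type, individual variables and individual constants of type $\iota$, function symbols of every functional type $\iota^n\to\iota$ ($n\ge1$), negation $\sim$, and equality $\approx$. Terms: variables and constants are terms of their type; if $\mathsf{f}$ is an $n$-ary function symbol and $\mathsf{E}_1,\dots,\mathsf{E}_n$ are terms of type $\iota$, then $(\mathsf{f}\,\mathsf{E}_1\cdots\mathsf{E}_n)$ is a term of type $\iota$; if $\mathsf{E}_1:\rho\to\pi$ and $\mathsf{E}_2:\rho$ are terms then $(\mathsf{E}_1\,\mathsf{E}_2)$ is a term of type $\pi$. Terms of type $o$ are atoms. Literals are atoms,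 expressions $(\mathsf{E}_1\approx\mathsf{E}_2)$ with $\mathsf{E}_1,\mathsf{E}_2$ terms of type $\iota$, and $(\sim\mathsf{E})$ with $\mathsf{E}$ an atom. A clause is $\mathsf{p}\,\mathsf{V}_1\cdots\mathsf{V}_n\leftarrow\mathsf{L}_1,\dots,\mathsf{L}_m$ where $\mathsf{p}$ is a predicate constant of type $\rho_1\to\cdots\to\rho_n\to o$, $\mathsf{V}_1,\dots,\mathsf{V}_n$ are distinct variables of types $\rho_1,\dots,\rho_n$, and the $\mathsf{L}_j$ are literals. A program is a finite set of clauses. For a program $\mathsf{P}$ and argument type $\rho$, $U_{\mathsf{P},\rho}$ is the set of ground (variable-free) terms of type $\rho$ built from the individual constants, function symbols and predicate constants occurring in $\mathsf{P}$; $U^+_{\mathsf{P},o}$ is $U_{\mathsf{P},o}$ together with all $(\mathsf{E}_1\approx\mathsf{E}_2)$ for $\mathsf{E}_1,\mathsf{E}_2\in U_{\mathsf{P},\iota}$ and all $(\sim\mathsf{E})$ for $\mathsf{E}\in U_{\mathsf{P},o}$. The ground instantiation $\mathsf{Gr(P)}$ is the set of all clauses obtained from clauses of $\mathsf{P}$ by substituting for every variable of the clause a term of $U_{\mathsf{P},\rho}$ of the same type $\rho$. It is regarded as a propositional program whose propositional variables are the ground atoms in $U_{\mathsf{P},o}$; a ground equality $(\mathsf{E}_1\approx\mathsf{E}_2)$ in a body is treated as the constant true if $\mathsf{E}_1,\mathsf{E}_2$ are syntactically identical and as the constant false otherwise. A three-valued interpretation of $\mathsf{Gr(P)}$ assigns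 to each ground atom a value in $\{\mathit{false},0,\mathit{true}\}$, extended to negations by $\sim$ swapping $\mathit{false}$ and $\mathit{true}$ and fixing $0$; it is a model if for every clause of $\mathsf{Gr(P)}$, the value of the head is $\ge$ the minimum of the values of the body literals, w.r.t. the truth order $\mathit{false}<0<\mathit{true}$ (empty body has value $\mathit{true}$). A (three-valued) Herbrand interpretation $I$ of $\mathsf{P}$ interprets each constant and function symbol by itself (so ground expressions denote themselves and application is syntactic application) and is determined by a valuation function $v_I:U^+_{\mathsf{P},o}\to\{\mathit{false},0,\mathit{true}\}$ such that $v_I(\mathsf{E}_1\approx\mathsf{E}_2)$ is $\mathit{true}$ if $\mathsf{E}_1=\mathsf{E}_2$ syntactically and $\mathit{false}$ otherwise, and $v_I(\sim\mathsf{E})$ is $\mathit{false},0,\mathit{true}$ when $v_I(\mathsf{E})$ is $\mathit{true},0,\mathit{false}$ respectively. A Herbrand state $s$ assigns to each variable of type $\rho$ an element of $U_{\mathsf{P},\rho}$; for an expression $\mathsf{E}$, $[\![\mathsf{E}]\!]_s$ is the ground expression obtained by replacing each variable $\mathsf{V}$ by $s(\mathsf{V})$. $I$ is a (Herbrand) model of $\mathsf{P}$ if for every clause $\mathsf{A}\leftarrow\mathsf{L}_1,\dots,\mathsf{L}_m$ of $\mathsf{P}$ and every state $s$, $v_I([\![\mathsf{A}]\!]_s)\ge\min\{v_I([\![\mathsf{L}_1]\!]_s),\dots,v_I([\![\mathsf{L}_m]\!]_s)\}$ in the truth order. Orderings: the truth order $\leq$ on values is $\mathit{false}\le0\le\mathit{true}$;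 the Fitting order $\preceq$ is $0\preceq\mathit{false}$, $0\preceq\mathit{true}$. For interpretations (of $\mathsf{P}$ or of $\mathsf{Gr(P)}$), $I\le J$ (resp. $I\preceq J$) iff the value of every ground atom $\mathsf{A}\in U_{\mathsf{P},o}$ under $I$ is $\le$ (resp. $\preceq$) its value under $J$. A model $M$ is $\le$-minimal (resp. $\preceq$-minimal) if there is no different model $N$ with $N\le M$ (resp. $N\preceq M$). *)

(* Defs.v *)
From Stdlib Require Import List ClassicalEpsilon.
Import ListNotations.

(* argument types  rho ::= iota | pi ;  predicate types  pi ::= o | rho -> pi *)
Inductive aty : Type :=
| AI : aty
| AP : pty -> aty
with pty : Type :=
| PO : pty
| PArr : aty -> pty -> pty.

Fixpoint arrows (rs : list aty) : pty :=
  match rs with [] => PO | r :: rs' => PArr r (arrows rs') end.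

(* Variables and predicate constants carry their (argument / predicate) type.
   FApp f [E1;..;En] is the application of the n-ary function symbol (f,n). *)
Inductive term : Type :=
| Var  (x : nat) (r : aty)
| PCon (c : nat) (p : pty)
| ICon (c : nat)
| FApp (f : nat) (args : list term)
| App  (t1 t2 : term).

Inductive has_ty : term -> aty -> Prop :=
| ty_var x r : has_ty (Var x r) r
| ty_pcon c p : has_ty (PCon c p) (AP p)
| ty_icon c : has_ty (ICon c) AI
| ty_fapp f args :
    args <> [] -> (forall t, In t args -> has_ty t AI) -> has_ty (FApp f args) AI
| ty_app t1 t2 r p :
    has_ty t1 (AP (PArr r p)) -> has_ty t2 r -> has_ty (App t1 t2) (AP p).

Inductive sym : Type :=
| SP (c : nat) (p : pty)
| SI (c : nat)
| SF (f : nat) (n : nat).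

Fixpoint syms (t : term) : list sym :=
  match t with
  | Var _ _ => []
  | PCon c p => [SP c p]
  | ICon c => [SI c]
  | FApp f args =>
      SF f (length args) ::
      (fix go (l : list term) : list sym :=
         match l with [] => [] | a :: l' => syms a ++ go l' end) args
  | App a b => syms a ++ syms b
  end.

Fixpoint vars (t : term) : list (nat * aty) :=
  match t with
  | Var x r => [(x, r)]
  | PCon _ _ | ICon _ => []
  | FApp _ args =>
      (fix go (l : list term) : list (nat * aty) :=
         match l with [] => [] | a :: l' => vars a ++ go l' end) args
  | App a b => vars a ++ vars b
  end.

Definition state := nat -> aty -> term.

Fixpoint subst (s : state) (t : term) : term :=
  match t with
  | Var x r => s x r
  | PCon c p => PCon c p
  | ICon c => ICon c
  | FApp f args => FApp f (map (subst s) args)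
  | App a b => App (subst s a) (subst s b)
  end.

Inductive lit : Type :=
| LAtom (t : term)
| LEq (t1 t2 : term)
| LNeg (t : term).

Definition lit_syms (l : lit) : list sym :=
  match l with LAtom t | LNeg t => syms t | LEq a b => syms a ++ syms b end.
Definition lit_vars (l : lit) : list (nat * aty) :=
  match l with LAtom t | LNeg t => vars t | LEq a b => vars a ++ vars b end.
Definition subst_lit (s : state) (l : lit) : lit :=
  match l with
  | LAtom t => LAtom (subst s t)
  | LEq a b => LEq (subst s a) (subst s b)
  | LNeg t => LNeg (subst s t)
  end.

Definition wf_lit (l : lit) : Prop :=
  match l with
  | LAtom t | LNeg t => has_ty t (AP PO)
  | LEq a b => has_ty a AI /\ has_ty b AI
  end.

(* clause  p V1 ... Vn <- L1, ..., Lm *)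
Record clause : Type := Clause {
  head_c : nat;
  head_ty : pty;
  head_args : list (nat * aty);
  body : list lit }.

Definition head_term (c : clause) : term :=
  fold_left (fun acc v => App acc (Var (fst v) (snd v)))
            (head_args c) (PCon (head_c c) (head_ty c)).

Definition wf_clause (c : clause) : Prop :=
  head_ty c = arrows (map snd (head_args c)) /\
  NoDup (head_args c) /\
  (forall l, In l (body c) -> wf_lit l).

Definition program := list clause.
Definition wf_program (P : program) : Prop := forall c, In c P -> wf_clause c.

Definition clause_syms (c : clause) : list sym :=
  SP (head_c c) (head_ty c) :: flat_map lit_syms (body c).
Definition prog_syms (P : program) : list sym := flat_map clause_syms P.
Definition clause_vars (c : clause) : list (nat * aty) :=
  head_args c ++ flat_map lit_vars (body c).

(* U_{P,rho}: ground terms of type rho built from symbols occurring in P *)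
Definition inU (P : program) (t : term) (r : aty) : Prop :=
  vars t = [] /\ has_ty t r /\ (forall s, In s (syms t) -> In s (prog_syms P)).

Definition admissible (P : program) (c : clause) (s : state) : Prop :=
  forall x r, In (x, r) (clause_vars c) -> inU P (s x r) r.

Inductive tv : Type := FF | ZZ | TT.

Definition tv_le (a b : tv) : Prop :=
  match a, b with
  | FF, _ => True
  | ZZ, (ZZ | TT) => True
  | TT, TT => True
  | _, _ => False
  end.

Definition tv_fle (a b : tv) : Prop :=   (* Fitting order: 0 below false, true *)
  a = ZZ \/ a = b.

Definition tv_neg (a : tv) : tv :=
  match a with FF => TT | ZZ => ZZ | TT => FF end.

Definition tv_min (a b : tv) : tv :=
  match a, b with
  | FF, _ | _, FF => FF
  | ZZ, _ | _, ZZ => ZZ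
  | TT, TT => TT
  end.

Definition body_min (vs : list tv) : tv := fold_right tv_min TT vs.

Definition syn_eq_val (a b : term) : tv :=
  if excluded_middle_informative (a = b) then TT else FF.

Definition ground_clause := (term * list lit)%type.

Definition Gr (P : program) (gc : ground_clause) : Prop :=
  exists c s, In c P /\ admissible P c s /\
    gc = (subst s (head_term c), map (subst_lit s) (body c)).

(* three-valued interpretation of Gr(P): a value for each ground atom
   (only its values on U_{P,o} matter) *)
Definition ginterp := term -> tv.

Definition gr_lit_val (M : ginterp) (l : lit) : tv :=
  match l with
  | LAtom t => M t
  | LNeg t => tv_neg (M t)
  | LEq a b => syn_eq_val a b
  end.

Definition gr_model (P : program) (M : ginterp) : Prop :=
  forall h b, Gr P (h, b) -> tv_le (body_min (map (gr_lit_val M) b)) (M h).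

Definition gr_le (P : program) (I J : ginterp) : Prop :=
  forall A, inU P A (AP PO) -> tv_le (I A) (J A).
Definition gr_fle (P : program) (I J : ginterp) : Prop :=
  forall A, inU P A (AP PO) -> tv_fle (I A) (J A).
Definition gr_differ (P : program) (I J : ginterp) : Prop :=
  exists A, inU P A (AP PO) /\ I A <> J A.

Definition gr_le_minimal (P : program) (M : ginterp) : Prop :=
  gr_model P M /\ ~ (exists N, gr_model P N /\ gr_differ P N M /\ gr_le P N M).
Definition gr_fle_minimal (P : program) (M : ginterp) : Prop :=
  gr_model P M /\ ~ (exists N, gr_model P N /\ gr_differ P N M /\ gr_fle P N M).

(* A Herbrand interpretation is determined by its valuation on ground atoms;
   on U^+_{P,o} equalities and negations are valued as prescribed. *)
Record hinterp : Type := HInterp { hval : term -> tv }.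

Definition h_val (I : hinterp) (l : lit) : tv :=
  match l with
  | LAtom t => hval I t
  | LEq a b => syn_eq_val a b
  | LNeg t => tv_neg (hval I t)
  end.

Definition h_model (P : program) (I : hinterp) : Prop :=
  forall c, In c P -> forall s : state, admissible P c s ->
    tv_le (body_min (map (fun l => h_val I (subst_lit s l)) (body c)))
          (hval I (subst s (head_term c))).

Definition h_le (P : program) (I J : hinterp) : Prop :=
  forall A, inU P A (AP PO) -> tv_le (hval I A) (hval J A).
Definition h_fle (P : program) (I J : hinterp) : Prop :=
  forall A, inU P A (AP PO) -> tv_fle (hval I A) (hval J A).
Definition h_differ (P : program) (I J : hinterp) : Prop :=
  exists A, inU P A (AP PO) /\ hval I A <> hval J A.

Definition h_le_minimal (P : program) (M : hinterp) : Prop :=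
  h_model P M /\ ~ (exists N, h_model P N /\ h_differ P N M /\ h_le P N M).
Definition h_fle_minimal (P : program) (M : hinterp) : Prop :=
  h_model P M /\ ~ (exists N, h_model P N /\ h_differ P N M /\ h_fle P N M).

(* Main.v *)
Require Import Defs.
From Stdlib Require Import List.
Import ListNotations.

Lemma vars_FApp f args : vars (FApp f args) = flat_map vars args.
Proof. induction args as [|a l IH]; simpl; auto. Qed.
Lemma syms_FApp f args : syms (FApp f args) = SF f (length args) :: flat_map syms args.
Proof. induction args as [|a l IH]; simpl; auto. Qed.

Lemma subst_ok P c s t r : has_ty t r ->
  (forall v, In v (vars t) -> In v (clause_vars c)) ->
  (forall y, In y (syms t) -> In y (prog_syms P)) -> admissible P c s -> inU P (subst s t) r.
Proof.
  intros H Hv Hs Ha. induction H; simpl.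
  - apply Ha, Hv. simpl; auto.
  - repeat split; [constructor|]. intros y Hy; apply Hs; exact Hy.
  - repeat split; [constructor|]. intros y Hy; apply Hs; exact Hy.
  - assert (IH: forall t, In t args -> inU P (subst s t) AI).
    { intros t Ht. apply H1; auto.
      - intros v Hv'. apply Hv. rewrite vars_FApp. apply in_flat_map. eauto.
      - intros y Hy. apply Hs. rewrite syms_FApp. right. apply in_flat_map. eauto. }
    repeat split.
    + rewrite vars_FApp. destruct (flat_map vars (map (subst s) args)) as [|v l] eqn:E; auto.
      exfalso. assert (Hin: In v (flat_map vars (map (subst s) args))) by (rewrite E; left; auto).
      apply in_flat_map in Hin. destruct Hin as [t [Ht Hvt]]. apply in_map_iff in Ht.
      destruct Ht as [a [<- Ha']]. destruct (IH a Ha') as [E' _]. rewrite E' in Hvt. inversion Hvt.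
    + constructor. destruct args; simpl; congruence.
      intros t Ht. apply in_map_iff in Ht. destruct Ht as [a [<- Ha']]. apply IH; auto.
    + intros y Hy. rewrite syms_FApp in Hy. destruct Hy as [<-|Hy].
      * apply Hs. rewrite syms_FApp, length_map. left; auto.
      * apply in_flat_map in Hy. destruct Hy as [t [Ht Hyt]]. apply in_map_iff in Ht.
        destruct Ht as [a [<- Ha']]. apply (IH a Ha'); auto.
  - assert (I1: inU P (subst s t1) (AP (PArr r p))).
    { apply IHhas_ty1; intros; [apply Hv|apply Hs]; simpl; apply in_or_app; auto. }
    assert (I2: inU P (subst s t2) r).
    { apply IHhas_ty2; intros; [apply Hv|apply Hs]; simpl; apply in_or_app; auto. }
    destruct I1 as [A1 [B1 C1]]. destruct I2 as [A2 [B2 C2]].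
    repeat split.
    + simpl; rewrite A1, A2; auto.
    + econstructor; eauto.
    + intros y Hy. simpl in Hy. apply in_app_or in Hy. destruct Hy; auto.
Qed.

Lemma fold_vars l acc : vars (fold_left (fun acc v => App acc (Var (fst v) (snd v))) l acc) = vars acc ++ l.
Proof. revert acc; induction l as [|[x r] l IH]; intros acc; simpl. rewrite app_nil_r; auto.
  rewrite IH. simpl. rewrite <- app_assoc. auto. Qed.
Lemma fold_syms l acc : syms (fold_left (fun acc v => App acc (Var (fst v) (snd v))) l acc) = syms acc.
Proof. revert acc; induction l as [|[x r] l IH]; intros acc; simpl; auto.
  rewrite IH. simpl. rewrite app_nil_r. auto. Qed.
Lemma fold_ty l acc : has_ty acc (AP (arrows (map snd l))) ->
  has_ty (fold_left (fun acc v => App acc (Var (fst v) (snd v))) l acc) (AP PO).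
Proof. revert acc; induction l as [|[x r] l IH]; intros acc H; simpl in *; auto.
  apply IH. econstructor; eauto. constructor. Qed.

Lemma in_prog P c y : In c P -> In y (clause_syms c) -> In y (prog_syms P).
Proof. intros. unfold prog_syms. apply in_flat_map. eauto. Qed.

Lemma head_ok P c s : wf_clause c -> In c P -> admissible P c s -> inU P (subst s (head_term c)) (AP PO).
Proof.
  intros [Hty _] Hc Ha. apply (subst_ok P c); auto.
  - unfold head_term. apply fold_ty. rewrite <- Hty. constructor.
  - intros v. unfold head_term. rewrite fold_vars. simpl. intros. unfold clause_vars. apply in_or_app; auto.
  - intros y. unfold head_term. rewrite fold_syms. simpl. intros [<-|[]]. apply (in_prog P c); simpl; auto.
Qed.

Lemma body_ok P c s N M : wf_clause c -> In c P -> admissible P c s ->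
  (forall A, inU P A (AP PO) -> hval N A = M A) ->
  map (fun l => h_val N (subst_lit s l)) (body c) = map (gr_lit_val M) (map (subst_lit s) (body c)).
Proof.
  intros [_ [_ Hw]] Hc Ha HNM. rewrite map_map. apply map_ext_in. intros l Hl.
  assert (Hv: forall v, In v (lit_vars l) -> In v (clause_vars c)).
  { intros v Hv. unfold clause_vars. apply in_or_app. right. apply in_flat_map; eauto. }
  assert (Hs: forall y, In y (lit_syms l) -> In y (prog_syms P)).
  { intros y Hy. apply (in_prog P c); auto. right. apply in_flat_map; eauto. }
  specialize (Hw l Hl). destruct l; simpl in *.
  - apply HNM. apply (subst_ok P c); auto.
  - auto.
  - f_equal. apply HNM. apply (subst_ok P c); auto.
Qed.

Lemma model_equiv P (HP : wf_program P) N M :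
  (forall A, inU P A (AP PO) -> hval N A = M A) -> (h_model P N <-> gr_model P M).
Proof.
  intros HNM. split.
  - intros H h b [c [s [Hc [Ha E]]]]. injection E as -> ->.
    rewrite <- (body_ok P c s N M); auto. rewrite <- HNM by (apply head_ok; auto). apply H; auto.
  - intros H c Hc s Ha. rewrite (body_ok P c s N M); auto. rewrite HNM by (apply head_ok; auto).
    apply H. exists c, s; auto.
Qed.

Theorem theorem1 (P : program) (HP : wf_program P) (M : ginterp) (MM : hinterp)
  (HMM : forall A, inU P A (AP PO) -> hval MM A = M A) :
  (h_model P MM <-> gr_model P M) /\
  (h_le_minimal P MM <-> gr_le_minimal P M) /\
  (h_fle_minimal P MM <-> gr_fle_minimal P M).
Proof.
  assert (E := model_equiv P HP MM M HMM).
  assert (EN : forall N, h_model P N <-> gr_model P (hval N))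
    by (intros N; apply model_equiv; auto).
  assert (EG : forall N : ginterp, gr_model P N <-> h_model P (HInterp N))
    by (intros N; symmetry; apply model_equiv; auto).
  unfold h_le_minimal, gr_le_minimal, h_fle_minimal, gr_fle_minimal,
    h_differ, gr_differ, h_le, gr_le, h_fle, gr_fle.
  split; [exact E|]. split; split; intros [H1 H2]; (split; [apply E; exact H1|]);
  intros [N [N1 [[A [A1 A2]] N3]]]; apply H2.
  - exists (HInterp N). split; [apply EG; auto|]. split.
    + exists A. simpl. rewrite HMM; auto.
    + intros B HB. simpl. rewrite HMM; auto.
  - exists (hval N). split; [apply EN; auto|]. split.
    + exists A. rewrite <- HMM; auto.
    + intros B HB. rewrite <- HMM; auto.
  - exists (HInterp N). split; [apply EG; auto|]. split.
    + exists A. simpl. rewrite HMM; auto.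
    + intros B HB. simpl. rewrite HMM; auto.
  - exists (hval N). split; [apply EN; auto|]. split.
    + exists A. rewrite <- HMM; auto.
    + intros B HB. rewrite <- HMM; auto.
Qed.
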